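(* There is an absolute constant $c>0$ such that for all $k\ge3$, with $R=F_{\lceil 2k/3\rceil}$, $$\mathcal{Q}_R(\mathcal{F}_k)\le c\,F_k^{-2/3},$$ where $\mathcal{F}_k=\{(j/F_k,\{jF_{k-1}/F_k\})\mid j=1,\ldots,F_k\}$.
   Context: $F_k$ is the $k$-th Fibonacci number: $F_1=F_2=1$, $F_k=F_{k-1}+F_{k-2}$; $\{x\}=x-\lfloor x\rfloor$. For $\boldsymbol{n}=(n_1,n_2)\in\mathbb{Z}^2$ let $|\boldsymbol{n}|=\max\{|n_1|,|n_2|\}$. For a point set $T_M=\{\boldsymbol{x}_1,\ldots,\boldsymbol{x}_M\}\subset\mathbb{R}^2$ and $R>0$, $$\mathcal{Q}_R(T_M)=\frac1R+\sum_{\substack{\boldsymbol{n}\in\mathbb{Z}^2\\0<|\boldsymbol{n}|<R}}\Big(\frac{1}{|\boldsymbol{n}|^{3/2}}+\frac{1}{(1+|n_1|)(1+|n_2|)}\Big)\Big|\frac1M\sum_{j=1}^M e^{2\pi\mathrm{i}\,\boldsymbol{n}\cdot\boldsymbol{x}_j}\Big|.$$ *)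

(* Defs.v *)
From Stdlib Require Import Reals Lra Lia ZArith Arith List.
Open Scope R_scope.

(* Fibonacci numbers: fib 0 = 0, fib 1 = fib 2 = 1. *)
Fixpoint fib (n : nat) : nat :=
  match n with
  | O => O
  | S m => match m with O => 1%nat | S p => (fib m + fib p)%nat end
  end.

(* fractional part {x} = x - floor x  (Stdlib frac_part, Int_part = floor) *)
Definition frac (x : R) : R := frac_part x.

Definition Zrange (N : nat) : list Z :=
  map (fun i => (Z.of_nat i - Z.of_nat N)%Z) (seq 0 (2 * N + 1)).

Definition sumR {A : Type} (l : list A) (f : A -> R) : R :=
  fold_right (fun a acc => f a + acc) 0 l.

Definition supnorm (n1 n2 : Z) : Z := Z.max (Z.abs n1) (Z.abs n2).

(* | (1/M) sum_j exp(2 pi i n.x_j) |, with the complex modulus written out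
   as sqrt (Re^2 + Im^2). *)
Definition expsum_abs (T : list (R * R)) (n1 n2 : Z) : R :=
  let ph := fun x : R * R => 2 * PI * (IZR n1 * fst x + IZR n2 * snd x) in
  / INR (length T) *
  sqrt ((sumR T (fun x => cos (ph x))) ^ 2 + (sumR T (fun x => sin (ph x))) ^ 2).

(* Q_R(T_M) for a positive integer R: sum over n in Z^2 with 0 < |n| < R,
   i.e. |n1|,|n2| <= R-1, (n1,n2) <> (0,0). *)
Definition QR (Rr : nat) (T : list (R * R)) : R :=
  / INR Rr +
  sumR (Zrange (Rr - 1)) (fun n1 =>
  sumR (Zrange (Rr - 1)) (fun n2 =>
    if (Z.eqb n1 0 && Z.eqb n2 0)%bool then 0 else
    (/ Rpower (IZR (supnorm n1 n2)) (3 / 2)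
     + / ((1 + IZR (Z.abs n1)) * (1 + IZR (Z.abs n2))))
    * expsum_abs T n1 n2)).

Definition fib_lattice (k : nat) : list (R * R) :=
  map (fun j => (INR j / INR (fib k),
                 frac (INR j * INR (fib (k - 1)) / INR (fib k))))
      (seq 1 (fib k)).

Definition ceil_2k3 (k : nat) : nat := ((2 * k + 2) / 3)%nat.

(* Main.v *)
Require Import Defs.
From Stdlib Require Import Reals Lra Lia ZArith Arith List Psatz.
Open Scope R_scope.

Lemma sumR_app {A} (l1 l2 : list A) f : sumR (l1 ++ l2) f = sumR l1 f + sumR l2 f.
Proof. induction l1; simpl; [lra|]. unfold sumR in *; simpl; rewrite IHl1; lra. Qed.

Lemma sumR_map {A B} (g : A -> B) l f : sumR (map g l) f = sumR l (fun x => f (g x)).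
Proof. induction l; simpl; auto. unfold sumR in *; simpl; rewrite IHl; auto. Qed.

Lemma sumR_le {A} (l : list A) f g : (forall x, In x l -> f x <= g x) -> sumR l f <= sumR l g.
Proof. induction l; intros H; unfold sumR in *; simpl; [lra|].
  assert (f a <= g a) by (apply H; left; auto).
  assert (fold_right (fun a0 acc => f a0 + acc) 0 l <= fold_right (fun a0 acc => g a0 + acc) 0 l)
   by (apply IHl; intros; apply H; right; auto). lra. Qed.

Lemma sumR_ext {A} (l : list A) f g : (forall x, In x l -> f x = g x) -> sumR l f = sumR l g.
Proof. intros H; apply Rle_antisym; apply sumR_le; intros; rewrite H; auto; lra. Qed.

Lemma sumR_plus {A} (l : list A) f g : sumR l (fun x => f x + g x) = sumR l f + sumR l g.
Proof. induction l; unfold sumR in *; simpl; [lra|]. rewrite IHl; lra. Qed.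

Lemma sumR_nonneg {A} (l : list A) f : (forall x, 0 <= f x) -> 0 <= sumR l f.
Proof. induction l; intros H; unfold sumR in *; simpl; [lra|]. specialize (IHl H); specialize (H a); lra. Qed.

Lemma sumR_const {A} (l : list A) c : sumR l (fun _ => c) = INR (length l) * c.
Proof. induction l; unfold sumR in *; simpl length; [simpl; lra|]. rewrite S_INR. simpl. rewrite IHl. lra. Qed.

Lemma sumR_prod {A B} (l : list A) (m : list B) g :
  sumR l (fun a => sumR m (fun b => g a b)) = sumR (list_prod l m) (fun p => g (fst p) (snd p)).
Proof. induction l; simpl; auto. rewrite sumR_app, sumR_map. simpl.
  unfold sumR at 1; simpl. fold (sumR l (fun a => sumR m (fun b => g a b))). rewrite IHl. auto. Qed.

Fixpoint rem1 (y : Z) (m : list Z) : list Z :=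
  match m with nil => nil | z :: m' => if Z.eq_dec z y then m' else z :: rem1 y m' end.

Lemma sumR_rem1 y m f : In y m -> sumR m f = f y + sumR (rem1 y m) f.
Proof. induction m; simpl; intros H; [contradiction|].
  destruct (Z.eq_dec a y); [subst; reflexivity|].
  destruct H; [congruence|]. unfold sumR in *; simpl. rewrite (IHm H). lra. Qed.

Lemma In_rem1 y z m : In z m -> z <> y -> In z (rem1 y m).
Proof. induction m; simpl; auto. intros [H|H] Hne; destruct (Z.eq_dec a y); subst; simpl; auto; congruence. Qed.

Lemma inj_sum {A} (l : list A) (m : list Z) (P : A -> bool) (h : A -> Z) (f : Z -> R) :
  NoDup l -> (forall y, 0 <= f y) ->
  (forall x, In x l -> P x = true -> In (h x) m) ->
  (forall x x', In x l -> In x' l -> P x = true -> P x' = true -> h x = h x' -> x = x') ->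
  sumR l (fun x => if P x then f (h x) else 0) <= sumR m f.
Proof.
  revert m; induction l as [|a l IH]; intros m Hnd Hf Hin Hinj.
  - unfold sumR; simpl. apply sumR_nonneg; auto.
  - inversion Hnd; subst. unfold sumR at 1; simpl. fold (sumR l (fun x => if P x then f (h x) else 0)).
    destruct (P a) eqn:Pa.
    + rewrite (sumR_rem1 (h a) m f) by (apply Hin; simpl; auto).
      assert (sumR l (fun x => if P x then f (h x) else 0) <= sumR (rem1 (h a) m) f); [|lra].
      apply IH; auto.
      * intros x Hx Px. apply In_rem1. apply Hin; simpl; auto.
        intros E. assert (x = a) by (apply Hinj; simpl; auto). subst; contradiction.
      * intros; apply Hinj; simpl; auto.
    + assert (sumR l (fun x => if P x then f (h x) else 0) <= sumR m f); [|lra].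
      apply IH; auto. intros; apply Hin; simpl; auto. intros; apply Hinj; simpl; auto.
Qed.

Lemma NoDup_prod {A B} (l : list A) (m : list B) : NoDup l -> NoDup m -> NoDup (list_prod l m).
Proof. induction 1; intros Hm; simpl; [constructor|].
  apply NoDup_app; auto.
  - apply NoDup_map_NoDup_ForallPairs; auto. intros u v _ _ E; inversion E; auto.
  - intros [a b] H1 H2. apply in_map_iff in H1. destruct H1 as [y [E _]]. inversion E; subst.
    apply in_prod_iff in H2. tauto.
Qed.

Lemma In_Zrange N z : In z (Zrange N) <-> (- Z.of_nat N <= z <= Z.of_nat N)%Z.
Proof. unfold Zrange. rewrite in_map_iff. split.
  - intros [i [E Hi]]. apply in_seq in Hi. lia.
  - intros H. exists (Z.to_nat (z + Z.of_nat N)). split; [lia|]. apply in_seq; lia. Qed.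

Lemma NoDup_Zrange N : NoDup (Zrange N).
Proof. unfold Zrange. apply NoDup_map_NoDup_ForallPairs; [|apply seq_NoDup].
  intros a b _ _ E; lia. Qed.

Local Open Scope nat_scope.

Lemma fib_SS n : fib (S (S n)) = (fib (S n) + fib n)%nat.
Proof. reflexivity. Qed.

Lemma fib_mono_S n : (fib n <= fib (S n))%nat.
Proof. destruct n; simpl; [lia|]. destruct n; simpl; lia. Qed.

Lemma fib_mono a b : (a <= b)%nat -> (fib a <= fib b)%nat.
Proof. induction 1; auto. pose proof (fib_mono_S m); lia. Qed.

Lemma fib_pos n : (1 <= n)%nat -> (1 <= fib n)%nat.
Proof. intros H. apply (fib_mono 1 n) in H. simpl in H. lia. Qed.

Lemma fib_add a b : fib (a + b + 1) = (fib (a+1) * fib (b+1) + fib a * fib b)%nat.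
Proof. revert b. induction a using lt_wf_ind; intros b.
  destruct a as [|[|a]].
  - simpl. lia.
  - replace (1 + b + 1)%nat with (S (S b)) by lia. rewrite fib_SS. replace (b+1)%nat with (S b) by lia. change (fib (1+1)) with 1%nat. change (fib 1) with 1%nat. lia.
  - replace (S (S a) + b + 1)%nat with (S (S (a + b + 1))) by lia. rewrite fib_SS.
    replace (S (a + b + 1)) with (S a + b + 1)%nat by lia.
    rewrite (H (S a)) by lia. rewrite (H a) by lia.
    replace (S (S a) + 1)%nat with (S (S (S a))) by lia. replace (S a + 1)%nat with (S (S a)) by lia.
    replace (a + 1)%nat with (S a) by lia. rewrite !fib_SS. lia.
Qed.

Lemma fib_mul_le a b : (fib a * fib b <= fib (a + b))%nat.
Proof. destruct a. simpl; lia.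
  replace (S a + b)%nat with (a + b + 1)%nat by lia. rewrite fib_add.
  replace (a+1)%nat with (S a) by lia. pose proof (fib_mono_S b). replace (b+1)%nat with (S b) by lia. nia. Qed.

Lemma fib_S_le2 b : (fib (S (S b)) <= 2 * fib (S b))%nat.
Proof. rewrite fib_SS. pose proof (fib_mono_S b). lia. Qed.

Lemma fib_add_le a b : (1 <= a)%nat -> (1 <= b)%nat -> (fib (a + b) <= 3 * fib a * fib b)%nat.
Proof. intros Ha Hb. destruct a as [|a]; [lia|]. destruct b as [|b]; [lia|].
  replace (S a + S b)%nat with (a + S b + 1)%nat by lia. rewrite fib_add.
  replace (a+1)%nat with (S a) by lia. replace (S b + 1)%nat with (S (S b)) by lia.
  pose proof (fib_S_le2 b). pose proof (fib_mono_S a). nia. Qed.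

Lemma cassini k : (1 <= k)%nat ->
  let P := Z.of_nat (fib k) in let Q := Z.of_nat (fib (k-1)) in
  (Q*Q + Q*P - P*P = 1 \/ Q*Q + Q*P - P*P = -1)%Z.
Proof. intros Hk. induction k as [|k IH]; [lia|]. destruct k.
  - simpl. lia.
  - simpl Nat.sub in *. replace (k - 0)%nat with k in * by lia.
    specialize (IH ltac:(lia)). simpl in IH.
    rewrite fib_SS. rewrite Nat2Z.inj_add.
    destruct k; simpl in *; [lia|].
    destruct IH; [right|left]; nia.
Qed.

Lemma fib_R_bounds k : (3 <= k)%nat ->
  let P := fib k in let R := fib (ceil_2k3 k) in
  (R*R*R <= 9*(P*P))%nat /\ (P*P <= 9*(R*R*R))%nat /\ (1 <= R)%nat /\ (2 * (R - 1) < P)%nat /\ (2 <= P)%nat.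
Proof. intros Hk P R. unfold ceil_2k3 in R.
  set (m := ((2*k+2)/3)%nat) in R.
  assert (Hm1 : (3*m <= 2*k+2)%nat) by (unfold m; pose proof (Nat.mul_div_le (2*k+2) 3); lia).
  assert (Hm2 : (2*k <= 3*m)%nat) by (unfold m; pose proof (Nat.mod_upper_bound (2*k+2) 3); pose proof (Nat.div_mod (2*k+2) 3); lia).
  assert (Hm0 : (2 <= m)%nat) by lia.
  assert (HR : (1 <= R)%nat) by (apply fib_pos; lia).
  assert (HPk : (2 <= P)%nat) by (unfold P; pose proof (fib_mono 3 k Hk); simpl in H; lia).
  split; [|split; [|split; [auto|split; [|auto]]]].
  - (* R^3 <= F_{3m} <= F_{2k+2} <= 9 P^2 *)
    pose proof (fib_mul_le m m). pose proof (fib_mul_le (m+m) m).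
    assert (fib (m+m+m) <= fib (2*k+2))%nat by (apply fib_mono; lia).
    assert (fib (2*k+2) <= 3 * fib (2*k))%nat.
    { replace (2*k+2)%nat with (S (S (2*k))) by lia. rewrite fib_SS.
      destruct (2*k)%nat eqn:E; [lia|]. rewrite fib_SS. pose proof (fib_mono_S n). lia. }
    assert (fib (k + k) <= 3 * fib k * fib k)%nat by (apply fib_add_le; lia).
    replace (2*k)%nat with (k+k)%nat in * by lia. unfold R, P. nia.
  - pose proof (fib_mul_le k k).
    assert (fib (k+k) <= fib (m+m+m))%nat by (apply fib_mono; lia).
    assert (fib (m+m+m) <= 3 * fib (m+m) * fib m)%nat by (apply fib_add_le; lia).
    assert (fib (m+m) <= 3 * fib m * fib m)%nat by (apply fib_add_le; lia).
    unfold R, P. nia.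
  -
    destruct (Nat.le_gt_cases 8 k).
    + assert (m <= k - 2)%nat by lia.
      assert (fib m <= fib (k-2))%nat by (apply fib_mono; lia).
      assert (fib k = fib (k-1) + fib (k-2))%nat.
      { replace k with (S (S (k-2))) at 1 by lia. rewrite fib_SS. f_equal. f_equal. lia. }
      pose proof (fib_mono (k-2) (k-1) ltac:(lia)). unfold R, P. lia.
    + unfold R, P, m. assert (k = 3 \/ k = 4 \/ k = 5 \/ k = 6 \/ k = 7)%nat by lia.
      repeat (destruct H0 as [-> | H0]); try (subst; simpl; lia).
Qed.

Local Close Scope nat_scope.
Open Scope R_scope.

Lemma cos_perZ x z : cos (x + 2 * IZR z * PI) = cos x.
Proof. destruct (Z_le_gt_dec 0 z).
  - replace z with (Z.of_nat (Z.to_nat z)) by lia. rewrite <- INR_IZR_INZ. apply cos_period.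
  - pose (y := x + 2 * IZR z * PI). replace x with (y + 2 * INR (Z.to_nat (- z)) * PI) at 2.
    + rewrite cos_period. reflexivity.
    + unfold y. rewrite INR_IZR_INZ, Z2Nat.id by lia. rewrite opp_IZR. ring.
Qed.

Lemma sin_perZ x z : sin (x + 2 * IZR z * PI) = sin x.
Proof. destruct (Z_le_gt_dec 0 z).
  - replace z with (Z.of_nat (Z.to_nat z)) by lia. rewrite <- INR_IZR_INZ. apply sin_period.
  - pose (y := x + 2 * IZR z * PI). replace x with (y + 2 * INR (Z.to_nat (- z)) * PI) at 2.
    + rewrite sin_period. reflexivity.
    + unfold y. rewrite INR_IZR_INZ, Z2Nat.id by lia. rewrite opp_IZR. ring.
Qed.

Lemma tele_cos th n : 2 * sin (th/2) * sumR (seq 1 n) (fun j => cos (INR j * th))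
   = sin ((INR n + /2) * th) - sin (th/2).
Proof. induction n.
  - unfold sumR; simpl. replace ((0 + /2) * th) with (th/2) by field. ring.
  - rewrite seq_S, sumR_app. unfold sumR at 2; cbn [fold_right].
    rewrite Rmult_plus_distr_l. rewrite IHn.
    replace (1 + n)%nat with (S n) by lia. rewrite !S_INR.
    replace ((INR n + 1 + /2) * th) with ((INR n + 1) * th + th/2) by field.
    replace ((INR n + /2) * th) with ((INR n + 1) * th - th/2) by field.
    rewrite sin_plus, sin_minus. ring.
Qed.

Lemma tele_sin th n : 2 * sin (th/2) * sumR (seq 1 n) (fun j => sin (INR j * th))
   = cos (th/2) - cos ((INR n + /2) * th).
Proof. induction n.
  - unfold sumR; simpl. replace ((0 + /2) * th) with (th/2) by field. ring.
  - rewrite seq_S, sumR_app. unfold sumR at 2; cbn [fold_right].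
    rewrite Rmult_plus_distr_l. rewrite IHn.
    replace (1 + n)%nat with (S n) by lia. rewrite !S_INR.
    replace ((INR n + 1 + /2) * th) with ((INR n + 1) * th + th/2) by field.
    replace ((INR n + /2) * th) with ((INR n + 1) * th - th/2) by field.
    rewrite cos_plus, cos_minus. ring.
Qed.

Lemma expsum_fib k n1 n2 : (0 < fib k)%nat ->
  expsum_abs (fib_lattice k) n1 n2 =
  if Z.eqb ((n1 + n2 * Z.of_nat (fib (k-1))) mod Z.of_nat (fib k)) 0 then 1 else 0.
Proof.
  intros Hk. set (P := fib k) in *. set (Q := fib (k-1)).
  set (m := (n1 + n2 * Z.of_nat Q)%Z).
  assert (HP : 0 < INR P) by (apply lt_0_INR; auto).
  set (th := 2 * PI * IZR m / INR P).
  assert (Hc : sumR (fib_lattice k) (fun x => cos (2 * PI * (IZR n1 * fst x + IZR n2 * snd x)))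
             = sumR (seq 1 P) (fun j => cos (INR j * th))).
  { unfold fib_lattice. rewrite sumR_map. apply sumR_ext. intros j _. simpl.
    unfold frac, frac_part. fold P Q.
    replace (2 * PI * (IZR n1 * (INR j / INR P) + IZR n2 * (INR j * INR Q / INR P - IZR (Int_part (INR j * INR Q / INR P)))))
      with (INR j * th + 2 * IZR (- (n2 * Int_part (INR j * INR Q / INR P))) * PI).
    - apply cos_perZ.
    - unfold th, m. rewrite opp_IZR, !mult_IZR, plus_IZR, mult_IZR, <- INR_IZR_INZ. field. lra. }
  assert (Hs : sumR (fib_lattice k) (fun x => sin (2 * PI * (IZR n1 * fst x + IZR n2 * snd x)))
             = sumR (seq 1 P) (fun j => sin (INR j * th))).
  { unfold fib_lattice. rewrite sumR_map. apply sumR_ext. intros j _. simpl.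
    unfold frac, frac_part. fold P Q.
    replace (2 * PI * (IZR n1 * (INR j / INR P) + IZR n2 * (INR j * INR Q / INR P - IZR (Int_part (INR j * INR Q / INR P)))))
      with (INR j * th + 2 * IZR (- (n2 * Int_part (INR j * INR Q / INR P))) * PI).
    - apply sin_perZ.
    - unfold th, m. rewrite opp_IZR, !mult_IZR, plus_IZR, mult_IZR, <- INR_IZR_INZ. field. lra. }
  unfold expsum_abs. simpl. rewrite Hc, Hs.
  assert (Hlen : length (fib_lattice k) = P) by (unfold fib_lattice; rewrite length_map, length_seq; auto).
  rewrite Hlen. fold m.
  destruct (Z.eqb_spec (m mod Z.of_nat P) 0) as [E|E].
  - apply Z.mod_divide in E; [|lia]. destruct E as [s Es].
    assert (Hj : forall j, INR j * th = 0 + 2 * IZR (Z.of_nat j * s) * PI).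
    { intros j. unfold th. rewrite Es, !mult_IZR, <- !INR_IZR_INZ. field. lra. }
    rewrite (sumR_ext _ _ (fun _ => 1)) by (intros j _; rewrite Hj, cos_perZ; apply cos_0).
    rewrite (sumR_ext _ (fun j => sin (INR j * th)) (fun _ => 0)) by (intros j _; rewrite Hj, sin_perZ; apply sin_0).
    rewrite !sumR_const, length_seq. match goal with |- context [sqrt ?a] => replace a with (INR P ^ 2) by ring end.
    rewrite sqrt_pow2 by lra. field. lra.
  - assert (Hsn : sin (th / 2) <> 0).
    { intros H0. apply sin_eq_0_0 in H0. destruct H0 as [z Hz]. apply E.
      assert (IZR m = IZR z * INR P).
      { unfold th in Hz. assert (PI > 0) by apply PI_RGT_0.
        apply Rmult_eq_reg_l with (PI / INR P). 2: { apply Rgt_not_eq. apply Rdiv_lt_0_compat; lra. }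
        replace (PI / INR P * IZR m) with (2 * PI * IZR m / INR P / 2) by (field; lra).
        rewrite Hz. field. lra. }
      rewrite INR_IZR_INZ, <- mult_IZR in H. apply eq_IZR in H. rewrite H. apply Z.mod_mul. lia. }
    assert (Hend : (INR P + /2) * th = th / 2 + 2 * IZR m * PI).
    { unfold th. field. lra. }
    assert (H1 : sumR (seq 1 P) (fun j => cos (INR j * th)) = 0).
    { pose proof (tele_cos th P) as T. rewrite Hend, sin_perZ in T.
      apply Rmult_eq_reg_l with (2 * sin (th/2)); [|lra]. lra. }
    assert (H2 : sumR (seq 1 P) (fun j => sin (INR j * th)) = 0).
    { pose proof (tele_sin th P) as T. rewrite Hend, cos_perZ in T.
      apply Rmult_eq_reg_l with (2 * sin (th/2)); [|lra]. lra. }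
    rewrite H1, H2. match goal with |- context [sqrt ?a] => replace a with 0 by ring end. rewrite sqrt_0. ring.
Qed.

Lemma Zabs_ge1 z : z <> 0%Z -> 1 <= Rabs (IZR z).
Proof. intros H. rewrite <- abs_IZR. apply IZR_le. lia. Qed.

Lemma hyper (P Q t d1 d2 M : Z) :
  (Q*Q + Q*P - P*P = 1 \/ Q*Q + Q*P - P*P = -1)%Z ->
  (0 <= Q <= P)%Z -> (0 <= M < P)%Z ->
  d1 = (t*P - d2*Q)%Z -> (d1 <> 0 \/ d2 <> 0)%Z ->
  (Z.abs d1 <= M)%Z -> (Z.abs d2 <= M)%Z -> (P <= 8 * Z.abs d1 * Z.abs d2)%Z.
Proof.
  intros Hc HQ HM Hd Hnz H1 H2.
  assert (Hd2 : d2 <> 0%Z).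
  { intros E. subst d2. assert (t <> 0%Z) by (intro; subst; lia).
    assert (Z.abs d1 >= P)%Z by (subst d1; rewrite Z.mul_0_l, Z.sub_0_r, Z.abs_mul; nia). lia. }
  apply le_IZR. rewrite !mult_IZR, !abs_IZR.
  set (p := IZR P). set (q := IZR Q). set (m := IZR M).
  assert (Hpm : 0 <= m < p) by (split; [apply IZR_le|apply IZR_lt]; lia).
  assert (Hq : 0 <= q <= p) by (split; apply IZR_le; lia).
  assert (Ha1 : Rabs (IZR d1) <= m) by (rewrite <- abs_IZR; apply IZR_le; lia).
  assert (Ha2 : Rabs (IZR d2) <= m) by (rewrite <- abs_IZR; apply IZR_le; lia).
  assert (Hb2 : 1 <= Rabs (IZR d2)) by (apply Zabs_ge1; auto).
  set (s := sqrt 5).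
  assert (Hs : s * s = 5) by (apply sqrt_sqrt; lra).
  assert (Hs0 : 0 <= s) by apply sqrt_pos.
  assert (Hs2 : 2 < s < 3) by nra.
  set (ph := (1 + s)/2). set (ps := (1 - s)/2).
  set (x := p * ps + q). set (y := p * ph + q).
  set (eps := IZR (Q*Q + Q*P - P*P)).
  assert (Hxy : x * y = eps).
  { unfold eps, x, y, ph, ps. rewrite minus_IZR, plus_IZR, !mult_IZR. fold p q.
    replace ((p * ((1 - s) / 2) + q) * (p * ((1 + s) / 2) + q)) with (p*p*(1 - s*s)/4 + p*q + q*q) by field.
    rewrite Hs. field. }
  assert (Heps : eps = 1 \/ eps = -1) by (unfold eps; destruct Hc as [-> | ->]; [left|right]; reflexivity).
  assert (Hy1 : p <= y) by (unfold y, ph; nra).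
  assert (Hy2 : y <= 3 * p) by (unfold y, ph; nra).
  assert (Hx : Rabs x * y = 1).
  { rewrite <- (Rabs_pos_eq y) by lra. rewrite <- Rabs_mult, Hxy. destruct Heps as [-> | ->]; [apply Rabs_R1|].
    rewrite Rabs_left; lra. }
  assert (Hxp : Rabs x * p <= 1) by nra.
  set (X := IZR d1 + x * IZR d2). set (Y := IZR d1 + y * IZR d2).
  set (N := (t*t + t*d2 - d2*d2)%Z).
  assert (HXY : X * Y = p * p * IZR N).
  { unfold X, Y, N, x, y. rewrite Hd. rewrite ?minus_IZR, ?plus_IZR, ?mult_IZR, ?minus_IZR, ?plus_IZR, ?mult_IZR. fold p q.
    unfold ph, ps.
    replace ((IZR t * p - IZR d2 * q + (p * ((1 - s) / 2) + q) * IZR d2) *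
     (IZR t * p - IZR d2 * q + (p * ((1 + s) / 2) + q) * IZR d2)) with
     (p*p*(IZR t * IZR t + IZR t * IZR d2 - IZR d2 * IZR d2) + p*p*IZR d2*IZR d2*(5 - s*s)/4) by field.
    rewrite Hs. field. }
  assert (Hxd : Rabs (x * IZR d2) <= 1).
  { rewrite Rabs_mult. assert (0 <= Rabs x) by apply Rabs_pos. nra. }
  destruct (Z.eq_dec N 0) as [HN|HN].
  - exfalso. rewrite HN in HXY. rewrite Rmult_0_r in HXY. apply Rmult_integral in HXY. destruct HXY as [HX|HY].
    + assert (Rabs (x * IZR d2) < 1).
      { rewrite Rabs_mult. assert (0 <= Rabs x) by apply Rabs_pos. nra. }
      assert (IZR d1 = - (x * IZR d2)) by (unfold X in HX; lra).
      assert (H1' : d1 = 0%Z).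
      { destruct (Z.eq_dec d1 0) as [|Hn]; auto. pose proof (Zabs_ge1 d1 Hn) as G. rewrite H0, Rabs_Ropp in G. lra. }
      assert (E0 : IZR d1 = 0) by (rewrite H1'; reflexivity).
      unfold X in HX. rewrite E0, Rplus_0_l in HX. apply Rmult_integral in HX. destruct HX as [Hx0|Hx0].
      * rewrite Hx0, Rabs_R0 in Hx. lra.
      * apply eq_IZR in Hx0. auto.
    + assert (IZR d1 = - (y * IZR d2)) by (unfold Y in HY; lra).
      assert (Rabs (IZR d1) = y * Rabs (IZR d2)) by (rewrite H, Rabs_Ropp, Rabs_mult, Rabs_pos_eq; lra).
      nra.
  - assert (HN1 : 1 <= Rabs (IZR N)) by (apply Zabs_ge1; auto).
    assert (HXY2 : p * p <= Rabs X * Rabs Y).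
    { rewrite <- Rabs_mult, HXY, Rabs_mult, Rabs_pos_eq by nra. nra. }
    assert (Hd1 : d1 <> 0%Z).
    { intros E. assert (E0 : IZR d1 = 0) by (rewrite E; reflexivity). unfold X, Y in HXY2. rewrite E0, !Rplus_0_l, !Rabs_mult in HXY2.
      assert (Rabs x * Rabs (IZR d2) * (Rabs y * Rabs (IZR d2)) = Rabs (IZR d2) * Rabs (IZR d2)).
      { rewrite (Rabs_pos_eq y) by lra. replace (Rabs x * Rabs (IZR d2) * (y * Rabs (IZR d2))) with (Rabs x * y * (Rabs (IZR d2) * Rabs (IZR d2))) by ring. rewrite Hx; ring. }
      nra. }
    assert (Hb1 : 1 <= Rabs (IZR d1)) by (apply Zabs_ge1; auto).
    assert (HX : Rabs X <= 2 * Rabs (IZR d1)).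
    { unfold X. pose proof (Rabs_triang (IZR d1) (x * IZR d2)). lra. }
    assert (HY : Rabs Y <= 4 * p * Rabs (IZR d2)).
    { unfold Y. pose proof (Rabs_triang (IZR d1) (y * IZR d2)). rewrite Rabs_mult, (Rabs_pos_eq y) in H by lra. nra. }
    assert (0 <= Rabs X) by apply Rabs_pos. assert (0 <= Rabs Y) by apply Rabs_pos.
    assert (p * p <= 8 * p * (Rabs (IZR d1) * Rabs (IZR d2))) by nra.
    nra.
Qed.

Lemma Rpower_pos x a : 0 < Rpower x a.
Proof. unfold Rpower; apply exp_pos. Qed.

Lemma Rpower_powfrac x a n : 0 < x -> (Rpower x a) ^ n = Rpower x (INR n * a).
Proof. intros H. rewrite <- Rpower_pow by apply Rpower_pos. rewrite Rpower_mult. f_equal; ring. Qed.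

Lemma Rpower_root x n : 0 < x -> (0 < n)%nat -> (Rpower x (/ INR n)) ^ n = x.
Proof. intros H Hn. rewrite Rpower_powfrac by auto. rewrite Rinv_r. apply Rpower_1; auto.
  apply not_0_INR; lia. Qed.

Lemma pow4_le a b : 0 <= a -> 0 <= b -> a ^ 4 <= b ^ 4 -> a <= b.
Proof. intros Ha Hb H. destruct (Rle_dec a b); auto. exfalso.
  assert (b < a) by lra. assert (b * b < a * a) by nra. assert (b ^ 4 < a ^ 4) by (simpl; nra). lra. Qed.

Lemma pow3_le a b : 0 <= a -> 0 <= b -> a ^ 3 <= b ^ 3 -> a <= b.
Proof. intros Ha Hb H. destruct (Rle_dec a b); auto. exfalso.
  assert (b < a) by lra. assert (b * b < a * a) by nra. assert (b ^ 3 < a ^ 3) by (simpl; nra). lra. Qed.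

Definition q4 (x : R) := Rpower x (/ INR 4).

Lemma q4_pow x : 0 < x -> (q4 x) ^ 4 = x.
Proof. intros; unfold q4; apply Rpower_root; auto. Qed.

Lemma sum_q4 K : (1 <= K)%nat -> sumR (seq 1 K) (fun i => / (q4 (INR i)) ^ 3) <= 4 * q4 (INR K).
Proof.
  induction K; intros HK; [lia|]. destruct K.
  - unfold sumR; simpl. assert (q4 1 = 1) by (unfold q4, Rpower; rewrite ln_1, Rmult_0_r, exp_0; auto).
    rewrite H. lra.
  - rewrite seq_S, sumR_app. specialize (IHK ltac:(lia)).
    unfold sumR at 2; cbn [fold_right]. replace (1 + S K)%nat with (S (S K)) by lia.
    set (a := q4 (INR (S K))). set (b := q4 (INR (S (S K)))).
    assert (Ha : a ^ 4 = INR (S K)) by (apply q4_pow; apply lt_0_INR; lia).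
    assert (Hb : b ^ 4 = INR (S (S K))) by (apply q4_pow; apply lt_0_INR; lia).
    assert (Ha0 : 0 < a) by apply Rpower_pos. assert (Hb0 : 0 < b) by apply Rpower_pos.
    rewrite S_INR in Hb.
    assert (Hab : a <= b) by (apply pow4_le; lra).
    assert (H1 : b^4 - a^4 = 1) by lra.
    assert (H2 : 1 <= 4 * b^3 * (b - a)).
    { replace (b^4 - a^4) with ((b - a) * (b^3 + b^2*a + b*a^2 + a^3)) in H1 by ring.
      assert (b^2*a <= b^3) by (simpl; nra). assert (b*a^2 <= b^3) by (simpl; nra). assert (a^3 <= b^3) by (simpl; nra). nra. }
    assert (H3 : / b ^ 3 <= 4 * (b - a)).
    { assert (0 < b^3) by (apply pow_lt; lra). apply (Rmult_le_reg_l (b^3)); auto. rewrite Rinv_r by lra. lra. }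
    unfold a in H3. fold (sumR (seq 1 (S K)) (fun i => / q4 (INR i) ^ 3)). lra.
Qed.

Lemma divb x P : (0 < P)%Z -> (P * (x / P) <= x < P * (x / P) + P)%Z.
Proof. intros H. pose proof (Z.div_mod x P ltac:(timeout 10 lia)). pose proof (Z.mod_pos_bound x P H). timeout 10 lia. Qed.

Definition Fw (pp : R) (y : Z) : R := if Z.eqb y 0 then 0 else 8 / (pp^3 * (q4 (IZR (Z.abs y)))^3).
Definition keyv (P v : Z) : Z := if Z.ltb 0 v then ((16*v*v)/P)%Z else (- ((16*v*v)/P))%Z.

Lemma Fw_nonneg pp y : 0 < pp -> 0 <= Fw pp y.
Proof. intros H. unfold Fw. destruct (Z.eqb y 0); [lra|].
  assert (0 < q4 (IZR (Z.abs y))) by apply Rpower_pos.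
  apply Rlt_le, Rdiv_lt_0_compat; [lra|]. apply Rmult_lt_0_compat; apply pow_lt; auto. Qed.

Lemma keyD P v : (0 < P)%Z -> (P <= 8 * v * v)%Z -> (1 <= (16*v*v)/P)%Z.
Proof. intros H1 H2. pose proof (divb (16*v*v) P H1). timeout 10 nia. Qed.

Lemma powbound a P D : 1 <= a -> 0 < P -> 0 < D -> P * D <= 16 * a^2 ->
  / Rpower a (3/2) <= 8 / ((q4 P)^3 * (q4 D)^3).
Proof. intros Ha HP HD H.
  set (z := Rpower a (/ INR 2)).
  assert (Hz : z ^ 2 = a) by (apply Rpower_root; lra || lia).
  assert (Hz3 : Rpower a (3/2) = z ^ 3) by (unfold z; rewrite Rpower_powfrac by lra; f_equal; simpl; field).
  assert (Hz0 : 0 < z) by apply Rpower_pos.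
  pose proof (q4_pow P HP). pose proof (q4_pow D HD).
  assert (0 < q4 P) by apply Rpower_pos. assert (0 < q4 D) by apply Rpower_pos.
  set (X := q4 P * q4 D). assert (0 < X) by (unfold X; nra).
  assert (HX : X <= 2 * z).
  { apply pow4_le; try lra. unfold X. rewrite Rpow_mult_distr, H0, H1.
    replace ((2*z)^4) with (16 * (z^2)^2) by ring. rewrite Hz. lra. }
  rewrite Hz3. replace (q4 P ^ 3 * q4 D ^ 3) with (X^3) by (unfold X; ring).
  assert (0 < X^3) by (apply pow_lt; auto). assert (0 < z^3) by (apply pow_lt; auto).
  assert (X^3 <= 8 * z^3) by (replace (8 * z^3) with ((2*z)^3) by ring; apply pow_incr; lra).
  apply (Rmult_le_reg_l (z^3 * X^3)); [nra|].
  replace (z ^ 3 * X ^ 3 * / z ^ 3) with (X^3) by (field; lra).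
  replace (z ^ 3 * X ^ 3 * (8 / X ^ 3)) with (8 * z^3) by (field; lra). lra.
Qed.

Lemma w1_bound P n1 n2 : (0 < P)%Z -> (Z.abs n1 <= Z.abs n2)%Z -> (P <= 8 * Z.abs n1 * Z.abs n2)%Z ->
  / Rpower (IZR (supnorm n1 n2)) (3/2) <= Fw (q4 (IZR P)) (keyv P n2).
Proof. intros HP Hab Hh.
  assert (Hn2 : n2 <> 0%Z) by (intro; subst; simpl in Hh; timeout 10 lia).
  assert (HD : (1 <= (16*n2*n2)/P)%Z) by (apply keyD; auto; timeout 10 nia).
  assert (Hsup : supnorm n1 n2 = Z.abs n2) by (unfold supnorm; timeout 10 lia).
  assert (Hk : Z.abs (keyv P n2) = ((16*n2*n2)/P)%Z) by (unfold keyv; destruct (Z.ltb 0 n2); timeout 10 lia).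
  unfold Fw. replace (Z.eqb (keyv P n2) 0) with false by (symmetry; apply Z.eqb_neq; timeout 10 lia).
  rewrite Hk, Hsup. apply powbound.
  - apply IZR_le; timeout 10 lia.
  - apply IZR_lt; auto.
  - apply IZR_lt; timeout 10 lia.
  - pose proof (divb (16*n2*n2) P HP). rewrite <- mult_IZR.
    replace (16 * IZR (Z.abs n2) ^ 2) with (IZR (16*n2*n2)) by (rewrite abs_IZR, pow2_abs, !mult_IZR; ring).
    apply IZR_le; timeout 10 lia.
Qed.

Lemma w2_bound P n1 n2 : (0 < P)%Z -> (P <= 8 * Z.abs n1 * Z.abs n2)%Z ->
  / ((1 + IZR (Z.abs n1)) * (1 + IZR (Z.abs n2))) <= 8 / IZR P.
Proof. intros HP H.
  assert (H' : IZR P <= 8 * IZR (Z.abs n1) * IZR (Z.abs n2)) by (rewrite <- !mult_IZR; apply IZR_le; auto).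
  assert (0 <= IZR (Z.abs n1)) by (apply IZR_le; timeout 10 lia). assert (0 <= IZR (Z.abs n2)) by (apply IZR_le; timeout 10 lia).
  assert (0 < IZR P) by (apply IZR_lt; auto).
  unfold Rdiv. rewrite Rmult_comm. rewrite <- (Rinv_inv 8). rewrite <- Rinv_mult.
  apply Rinv_le_contravar. nra. nra.
Qed.

Lemma keyv_inj P a1 a2 b1 b2 : (0 < P)%Z -> (Z.abs a1 <= Z.abs a2)%Z -> (Z.abs b1 <= Z.abs b2)%Z ->
  (P <= 8 * Z.abs a1 * Z.abs a2)%Z -> (P <= 8 * Z.abs b1 * Z.abs b2)%Z ->
  keyv P a2 = keyv P b2 -> (P <= 8 * Z.abs (a1 - b1) * Z.abs (a2 - b2))%Z -> False.
Proof. intros HP Ha Hb Hha Hhb Hk Hd.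
  assert (Hn2 : a2 <> 0%Z) by (intro; subst; simpl in Hha; timeout 10 lia).
  assert (Hm2 : b2 <> 0%Z) by (intro; subst; simpl in Hhb; timeout 10 lia).
  assert (HDa : (1 <= (16*a2*a2)/P)%Z) by (apply keyD; auto; timeout 10 nia).
  assert (HDb : (1 <= (16*b2*b2)/P)%Z) by (apply keyD; auto; timeout 10 nia).
  pose proof (divb (16*a2*a2) P HP). pose proof (divb (16*b2*b2) P HP).
  assert (HX : (Z.abs (a1 - b1) <= Z.abs a2 + Z.abs b2)%Z) by timeout 10 lia.
  unfold keyv in Hk.
  destruct (Z.ltb_spec 0 a2); destruct (Z.ltb_spec 0 b2); try timeout 10 lia.
  - assert (E : ((16*a2*a2)/P = (16*b2*b2)/P)%Z) by timeout 10 lia.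
    rewrite E in *.
    assert (Habs : ((Z.abs a2 + Z.abs b2) * Z.abs (a2 - b2) = Z.abs (a2*a2 - b2*b2))%Z).
    { rewrite !Z.abs_eq with (n := a2), Z.abs_eq with (n := b2) by timeout 10 lia.
      replace (a2*a2 - b2*b2)%Z with ((a2+b2)*(a2-b2))%Z by ring. rewrite Z.abs_mul, (Z.abs_eq (a2+b2)) by timeout 10 lia. ring. }
    assert (0 <= Z.abs (a2 - b2))%Z by timeout 10 lia.
    assert (Z.abs (a1-b1) * Z.abs (a2-b2) <= (Z.abs a2 + Z.abs b2) * Z.abs (a2-b2))%Z by (apply Z.mul_le_mono_nonneg_r; lia).
    assert (P <= 8 * Z.abs (a2*a2 - b2*b2))%Z by timeout 10 lia.
    assert (16 * Z.abs (a2*a2 - b2*b2) < P)%Z by timeout 10 lia. timeout 10 lia.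
  - assert (E : ((16*a2*a2)/P = (16*b2*b2)/P)%Z) by timeout 10 lia.
    rewrite E in *.
    assert (Habs : ((Z.abs a2 + Z.abs b2) * Z.abs (a2 - b2) = Z.abs (a2*a2 - b2*b2))%Z).
    { rewrite !Z.abs_neq with (n := a2), Z.abs_neq with (n := b2) by timeout 10 lia.
      replace (a2*a2 - b2*b2)%Z with ((a2+b2)*(a2-b2))%Z by ring. rewrite Z.abs_mul, (Z.abs_neq (a2+b2)) by timeout 10 lia. ring. }
    assert (0 <= Z.abs (a2 - b2))%Z by timeout 10 lia.
    assert (Z.abs (a1-b1) * Z.abs (a2-b2) <= (Z.abs a2 + Z.abs b2) * Z.abs (a2-b2))%Z by (apply Z.mul_le_mono_nonneg_r; lia).
    assert (P <= 8 * Z.abs (a2*a2 - b2*b2))%Z by timeout 10 lia.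
    assert (16 * Z.abs (a2*a2 - b2*b2) < P)%Z by timeout 10 lia. timeout 10 lia.
Qed.

Lemma keyC_inj P Rz a1 a2 b1 b2 : (0 < P)%Z -> (Z.abs a1 < Rz)%Z -> (Z.abs b1 < Rz)%Z ->
  ((16*Rz*a2)/P = (16*Rz*b2)/P)%Z -> (P <= 8 * Z.abs (a1 - b1) * Z.abs (a2 - b2))%Z -> False.
Proof. intros HP H1 H2 Hk Hd.
  pose proof (divb (16*Rz*a2) P HP). pose proof (divb (16*Rz*b2) P HP).
  assert (Z.abs (a1 - b1) < 2 * Rz)%Z by timeout 10 lia.
  assert (Z.abs (16*Rz*a2 - 16*Rz*b2) < P)%Z by timeout 10 lia.
  replace (16*Rz*a2 - 16*Rz*b2)%Z with (16*Rz*(a2-b2))%Z in H4 by ring.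
  rewrite Z.abs_mul in H4. rewrite (Z.abs_eq (16*Rz)) in H4 by timeout 10 lia. timeout 10 nia.
Qed.

Lemma final_num (Rr Pr u pp qK Kr : R) : 1 <= Rr -> 2 <= Pr -> u^3 = Pr -> pp^4 = Pr -> 0 < u -> 0 < pp -> 0 < qK ->
  qK^4 = Kr -> Kr <= 16*Rr^2/Pr + 1 -> Rr^3 <= 9 * Pr^2 -> Pr^2 <= 9 * Rr^3 ->
  / Rr + 2 * (2 * (8 / pp^3) * (4 * qK)) + (2*Kr+1)*(8/Pr) <= 3000 / u^2.
Proof. intros HR HP Hu Hp Hu0 Hp0 Hq HqK HK H1 H2.
  assert (Hu1 : 1 <= u).
  { destruct (Rle_dec 1 u); auto. assert (u^3 < 1) by (simpl; nra). lra. }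
  assert (Hu2 : 0 < u^2) by (apply pow_lt; lra).
  assert (HRu : Rr <= 3 * u^2).
  { apply pow3_le; [lra|nra|]. replace ((3*u^2)^3) with (27 * (u^3)^2) by ring. rewrite Hu. nra. }
  assert (HRu2 : u^2 <= 3 * Rr).
  { apply pow3_le; [nra|lra|]. replace ((u^2)^3) with ((u^3)^2) by ring. rewrite Hu.
    assert (Rr^3 <= (3*Rr)^3) by (replace ((3*Rr)^3) with (27*Rr^3) by ring; assert (0 < Rr^3) by (apply pow_lt; lra); lra). nra. }
  assert (HK2 : Kr <= 145 * u).
  { assert (16 * Rr^2 / Pr <= 144 * u).
    { rewrite <- Hu. apply (Rmult_le_reg_l (u^3)); [apply pow_lt; lra|].
      replace (u ^ 3 * (16 * Rr ^ 2 / u ^ 3)) with (16 * Rr^2) by (field; lra).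
      assert (Rr^2 <= 9 * u^4) by (replace (9*u^4) with ((3*u^2)^2) by ring; apply pow_incr; lra). nra. }
    lra. }
  assert (T1 : / Rr <= 3 / u^2).
  { apply (Rmult_le_reg_l (Rr * u^2)); [nra|]. replace (Rr * u^2 * / Rr) with (u^2) by (field; lra).
    replace (Rr * u ^ 2 * (3 / u ^ 2)) with (3 * Rr) by (field; lra). lra. }
  assert (Hpp3 : 0 < pp^3) by (apply pow_lt; lra).
  assert (HqK2 : qK * u^2 <= 4 * pp^3).
  { apply pow4_le; [nra|nra|]. replace ((qK * u^2)^4) with (qK^4 * u^8) by ring. rewrite HqK.
    replace ((4 * pp^3)^4) with (256 * (pp^4)^3) by ring. rewrite Hp, <- Hu.
    replace (256 * (u^3)^3) with (256 * u * u^8) by ring.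
    assert (0 < u^8) by (apply pow_lt; lra).
    assert (Kr <= 256 * u) by lra. nra. }
  assert (T2 : 2 * (2 * (8 / pp^3) * (4 * qK)) <= 512 / u^2).
  { apply (Rmult_le_reg_l (pp^3 * u^2)); [nra|].
    replace (pp ^ 3 * u ^ 2 * (2 * (2 * (8 / pp ^ 3) * (4 * qK)))) with (128 * (qK * u^2)) by (field; lra).
    replace (pp ^ 3 * u ^ 2 * (512 / u ^ 2)) with (512 * pp^3) by (field; lra). lra. }
  assert (T3 : (2*Kr+1)*(8/Pr) <= 2344 / u^2).
  { rewrite <- Hu. apply (Rmult_le_reg_l (u^3)); [apply pow_lt; lra|].
    replace (u ^ 3 * ((2 * Kr + 1) * (8 / u ^ 3))) with ((2*Kr+1)*8) by (field; lra).
    replace (u ^ 3 * (2344 / u ^ 2)) with (2344 * u) by (field; lra). lra. }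
  assert (3 / u^2 + 512 / u^2 + 2344 / u^2 <= 3000 / u^2).
  { unfold Rdiv. rewrite <- !Rmult_plus_distr_r. apply Rmult_le_compat_r; [left; apply Rinv_0_lt_compat; lra| lra]. }
  lra.
Qed.

Definition inLb (P Q n1 n2 : Z) : bool := Z.eqb ((n1 + n2*Q) mod P) 0.
Definition isS (P Q : Z) (p : Z*Z) : bool :=
  negb (Z.eqb (fst p) 0 && Z.eqb (snd p) 0) && inLb P Q (fst p) (snd p).

Lemma inL_t P Q n1 n2 : (0 < P)%Z -> inLb P Q n1 n2 = true -> exists t, n1 = (t*P - n2*Q)%Z.
Proof. unfold inLb. intros HP H. apply Z.eqb_eq in H.
  pose proof (Z.div_mod (n1 + n2*Q) P ltac:(lia)). rewrite H in H0.
  exists ((n1 + n2*Q)/P)%Z. lia. Qed.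

Lemma hypS P Q N a1 a2 b1 b2 :
  (Q*Q + Q*P - P*P = 1 \/ Q*Q + Q*P - P*P = -1)%Z -> (0 <= Q <= P)%Z -> (0 <= 2*N < P)%Z ->
  (Z.abs a1 <= N)%Z -> (Z.abs a2 <= N)%Z -> (Z.abs b1 <= N)%Z -> (Z.abs b2 <= N)%Z ->
  inLb P Q a1 a2 = true -> inLb P Q b1 b2 = true -> (a1, a2) <> (b1, b2) ->
  (P <= 8 * Z.abs (a1 - b1) * Z.abs (a2 - b2))%Z.
Proof. intros Hc HQ HN H1 H2 H3 H4 Ha Hb Hne.
  destruct (inL_t P Q a1 a2 ltac:(lia) Ha) as [ta Hta].
  destruct (inL_t P Q b1 b2 ltac:(lia) Hb) as [tb Htb].
  apply (hyper P Q (ta - tb) (a1 - b1) (a2 - b2) (2*N)); auto; try lia.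
  destruct (Z.eq_dec a1 b1) as [e1|e1]; [destruct (Z.eq_dec a2 b2) as [e2|e2]; [exfalso; apply Hne; rewrite e1, e2; reflexivity| right; lia] | left; lia].
Qed.

Lemma sumR_scal {A} (l : list A) c f : sumR l (fun x => c * f x) = c * sumR l f.
Proof. induction l; unfold sumR in *; simpl; [ring|]. rewrite IHl; ring. Qed.

Lemma bound_k k : (3 <= k)%nat ->
  QR (fib (ceil_2k3 k)) (fib_lattice k) <= 3000 * Rpower (INR (fib k)) (- (2 / 3)).
Proof.
  intros Hk.
  destruct (fib_R_bounds k Hk) as [HB1 [HB2 [HR1 [HRP HP2]]]].
  pose proof (cassini k ltac:(lia)) as Hcas. cbv zeta in Hcas.
  assert (HQP : (fib (k-1) <= fib k)%nat) by (apply fib_mono; lia).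
  unfold QR. rewrite sumR_prod.
  set (Pn := fib k) in *. set (Rn := fib (ceil_2k3 k)) in *. set (Qn := fib (k-1)) in *.
  set (P := Z.of_nat Pn) in *. set (Q := Z.of_nat Qn) in *. set (Rz := Z.of_nat Rn).
  set (N := (Rn - 1)%nat) in *.
  set (B := (16*Rz*Rz)%Z).
  set (K := (Z.to_nat (B/P) + 1)%nat).
  set (pp := q4 (IZR P)).
  set (box := list_prod (Zrange N) (Zrange N)).
  assert (HP0 : (0 < P)%Z) by lia.
  assert (HQ : (0 <= Q <= P)%Z) by lia.
  assert (HN : (0 <= 2 * Z.of_nat N < P)%Z) by lia.
  assert (HNR : (Z.of_nat N < Rz)%Z) by lia.
  assert (Hbox : forall p, In p box -> (Z.abs (fst p) <= Z.of_nat N /\ Z.abs (snd p) <= Z.of_nat N)%Z).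
  { intros [a b] H. apply in_prod_iff in H. destruct H as [Ha Hb].
    apply In_Zrange in Ha. apply In_Zrange in Hb. simpl. lia. }
  assert (HS : forall a b, In a box -> In b box -> isS P Q a = true -> isS P Q b = true -> a <> b ->
            (P <= 8 * Z.abs (fst a - fst b) * Z.abs (snd a - snd b))%Z).
  { intros [a1 a2] [b1 b2] Ha Hb Sa Sb Hne. apply Hbox in Ha. apply Hbox in Hb. simpl in *.
    unfold isS in Sa, Sb. simpl in Sa, Sb. apply andb_prop in Sa. apply andb_prop in Sb.
    apply (hypS P Q (Z.of_nat N)); tauto. }
  assert (Hsing : forall p, In p box -> isS P Q p = true -> (P <= 8 * Z.abs (fst p) * Z.abs (snd p))%Z).
  { intros [a1 a2] Ha Sa. pose proof (Hbox _ Ha) as Hb. simpl in *.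
    unfold isS in Sa. simpl in Sa. apply andb_prop in Sa. destruct Sa as [Sa1 Sa2].
    replace a1 with (a1 - 0)%Z by ring. replace a2 with (a2 - 0)%Z by ring.
    apply (hypS P Q (Z.of_nat N)); auto; try lia.
    intros E. inversion E; subst. simpl in Sa1. discriminate. }
  set (fA := fun p : Z*Z => if andb (isS P Q p) (Z.leb (Z.abs (fst p)) (Z.abs (snd p))) then Fw pp (keyv P (snd p)) else 0).
  set (fB := fun p : Z*Z => if andb (isS P Q p) (Z.ltb (Z.abs (snd p)) (Z.abs (fst p))) then Fw pp (keyv P (fst p)) else 0).
  set (fC := fun p : Z*Z => if isS P Q p then (fun _ : Z => 8 / IZR P) ((16*Rz*snd p)/P)%Z else 0).
  assert (Hpp : 0 < pp) by apply Rpower_pos.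
  assert (HIP : 0 < IZR P) by (apply IZR_lt; auto).
  apply Rle_trans with (/ INR Rn + (sumR box fA + sumR box fB + sumR box fC)).
  { apply Rplus_le_compat_l. rewrite <- !sumR_plus. apply sumR_le. intros [n1 n2] Hin.
    cbn beta iota. unfold fA, fB, fC. cbn [fst snd].
    assert (HF1 : forall y, 0 <= Fw pp y) by (intros; apply Fw_nonneg; auto).
    assert (H8 : 0 <= 8 / IZR P) by (apply Rlt_le, Rdiv_lt_0_compat; lra).
    destruct (andb (Z.eqb n1 0) (Z.eqb n2 0)) eqn:E0.
    - unfold isS. cbn [fst snd]. rewrite E0. simpl. lra.
    - rewrite expsum_fib by lia. change (Z.of_nat (fib (k-1))) with Q. change (Z.of_nat (fib k)) with P.
      destruct (Z.eqb ((n1 + n2 * Q) mod P) 0) eqn:EL.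
      + assert (Hi : isS P Q (n1, n2) = true) by (unfold isS, inLb; cbn [fst snd]; rewrite E0, EL; reflexivity).
        pose proof (Hsing _ Hin Hi) as Hs. cbn [fst snd] in Hs.
        rewrite Hi. rewrite Rmult_1_r. simpl andb.
        pose proof (w2_bound P n1 n2 HP0 Hs).
        destruct (Z.leb_spec (Z.abs n1) (Z.abs n2)).
        * replace (Z.ltb (Z.abs n2) (Z.abs n1)) with false by (symmetry; apply Z.ltb_ge; lia).
          pose proof (w1_bound P n1 n2 HP0 H0 Hs). fold pp in H1. lra.
        * replace (Z.ltb (Z.abs n2) (Z.abs n1)) with true by (symmetry; apply Z.ltb_lt; lia).
          assert (Hs' : (P <= 8 * Z.abs n2 * Z.abs n1)%Z) by lia.
          pose proof (w1_bound P n2 n1 HP0 ltac:(lia) Hs'). fold pp in H1.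
          replace (supnorm n1 n2) with (supnorm n2 n1) by (unfold supnorm; lia). lra.
      + assert (Hi : isS P Q (n1, n2) = false) by (unfold isS, inLb; cbn [fst snd]; rewrite E0, EL; reflexivity).
        rewrite Hi. simpl andb. lra. }
  assert (HK1 : (1 <= K)%nat) by lia.
  assert (HBP : (0 <= B/P)%Z) by (apply Z.div_pos; unfold B; lia).
  assert (HKz : (Z.of_nat K = B/P + 1)%Z) by lia.
  assert (HkeyR : forall v, (Z.abs v <= Z.of_nat N)%Z -> ((16*v*v)/P <= B/P)%Z).
  { intros v Hv. apply Z.div_le_mono; [lia|]. unfold B.
    assert (Z.abs v * Z.abs v <= Rz * Rz)%Z by (apply Z.mul_le_mono_nonneg; lia).
    assert (Z.abs v * Z.abs v = v * v)%Z by (rewrite <- Z.abs_mul; apply Z.abs_eq; nia). lia. }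
  assert (Hsq : forall a1 a2 : Z, (Z.abs a1 <= Z.abs a2)%Z -> (P <= 8 * Z.abs a1 * Z.abs a2)%Z -> (P <= 8 * a2 * a2)%Z).
  { intros a1 a2 H1 H2. assert (Z.abs a1 * Z.abs a2 <= Z.abs a2 * Z.abs a2)%Z by (apply Z.mul_le_mono_nonneg_r; lia).
    assert (Z.abs a2 * Z.abs a2 = a2 * a2)%Z by (rewrite <- Z.abs_mul; apply Z.abs_eq; nia). lia. }
  set (mA := map Z.of_nat (seq 1 K) ++ map (fun i => (- Z.of_nat i)%Z) (seq 1 K)).
  assert (HinA : forall a2, (Z.abs a2 <= Z.of_nat N)%Z -> (P <= 8 * a2 * a2)%Z -> In (keyv P a2) mA).
  { intros a2 Hn Hp. pose proof (keyD P a2 HP0 Hp). pose proof (HkeyR a2 Hn).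
    unfold keyv, mA. destruct (Z.ltb_spec 0 a2).
    - apply in_or_app; left. apply in_map_iff. exists (Z.to_nat ((16*a2*a2)/P)). split; [lia|]. apply in_seq. lia.
    - apply in_or_app; right. apply in_map_iff. exists (Z.to_nat ((16*a2*a2)/P)). split; [lia|]. apply in_seq. lia. }
  assert (HND : NoDup box) by (apply NoDup_prod; apply NoDup_Zrange).
  assert (HF1 : forall y, 0 <= Fw pp y) by (intros; apply Fw_nonneg; auto).
  assert (SA : sumR box fA <= sumR mA (Fw pp)).
  { unfold fA. apply (inj_sum box mA (fun p => andb (isS P Q p) (Z.leb (Z.abs (fst p)) (Z.abs (snd p)))) (fun p => keyv P (snd p)) (Fw pp)); auto.
    - intros [a1 a2] Hin Hp. apply andb_prop in Hp. destruct Hp as [Hs Hle]. apply Z.leb_le in Hle.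
      pose proof (Hsing _ Hin Hs). pose proof (Hbox _ Hin). cbn [fst snd] in *. apply HinA; [lia|]. eapply Hsq; eauto.
    - intros [a1 a2] [b1 b2] Ha Hb Hpa Hpb Hkey. simpl in Hkey.
      apply andb_prop in Hpa. destruct Hpa as [Sa La]. apply andb_prop in Hpb. destruct Hpb as [Sb Lb].
      apply Z.leb_le in La. apply Z.leb_le in Lb.
      pose proof (Hsing _ Ha Sa). pose proof (Hsing _ Hb Sb). cbn [fst snd] in *.
      destruct (Z.eq_dec a1 b1) as [e1|e1]; destruct (Z.eq_dec a2 b2) as [e2|e2]; try (rewrite e1, e2; reflexivity);
      exfalso; (apply (keyv_inj P a1 a2 b1 b2); auto; apply (HS (a1,a2) (b1,b2)); auto; intros E; inversion E; congruence). }
  assert (SB : sumR box fB <= sumR mA (Fw pp)).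
  { unfold fB. apply (inj_sum box mA (fun p => andb (isS P Q p) (Z.ltb (Z.abs (snd p)) (Z.abs (fst p)))) (fun p => keyv P (fst p)) (Fw pp)); auto.
    - intros [a1 a2] Hin Hp. apply andb_prop in Hp. destruct Hp as [Hs Hle]. apply Z.ltb_lt in Hle.
      pose proof (Hsing _ Hin Hs). pose proof (Hbox _ Hin). cbn [fst snd] in *. apply HinA; [lia|]. apply (Hsq a2 a1); [lia|]. lia.
    - intros [a1 a2] [b1 b2] Ha Hb Hpa Hpb Hkey. simpl in Hkey.
      apply andb_prop in Hpa. destruct Hpa as [Sa La]. apply andb_prop in Hpb. destruct Hpb as [Sb Lb].
      apply Z.ltb_lt in La. apply Z.ltb_lt in Lb.
      pose proof (Hsing _ Ha Sa). pose proof (Hsing _ Hb Sb). cbn [fst snd] in *.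
      destruct (Z.eq_dec a1 b1) as [e1|e1]; destruct (Z.eq_dec a2 b2) as [e2|e2]; try (rewrite e1, e2; reflexivity);
      exfalso; (apply (keyv_inj P a2 a1 b2 b1); auto; try lia;
        assert (P <= 8 * Z.abs (a1 - b1) * Z.abs (a2 - b2))%Z by (apply (HS (a1,a2) (b1,b2)); auto; intros E; inversion E; congruence); lia). }
  assert (SC : sumR box fC <= sumR (Zrange K) (fun _ => 8 / IZR P)).
  { unfold fC. apply (inj_sum box (Zrange K) (isS P Q) (fun p => ((16*Rz*snd p)/P)%Z) (fun _ => 8 / IZR P)); auto.
    - intros; apply Rlt_le, Rdiv_lt_0_compat; lra.
    - intros [a1 a2] Hin Hs. pose proof (Hbox _ Hin). cbn [fst snd] in *. apply In_Zrange.
      assert (Hx : (Z.abs (16*Rz*a2) <= B)%Z) by (unfold B; rewrite !Z.abs_mul; rewrite (Z.abs_eq Rz) by lia; nia).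
      pose proof (divb (16*Rz*a2) P HP0). pose proof (divb B P HP0).
      assert ((16*Rz*a2)/P <= B/P)%Z by (apply Z.div_le_mono; lia).
      assert (- (B/P) - 1 <= (16*Rz*a2)/P)%Z.
      { assert (P * (- (B/P) - 1) < P * ((16*Rz*a2)/P + 1))%Z by lia.
        apply Z.mul_lt_mono_pos_l in H3; lia. }
      lia.
    - intros [a1 a2] [b1 b2] Ha Hb Sa Sb Hkey. simpl in Hkey. pose proof (Hbox _ Ha). pose proof (Hbox _ Hb). cbn [fst snd] in *.
      destruct (Z.eq_dec a1 b1) as [e1|e1]; destruct (Z.eq_dec a2 b2) as [e2|e2]; try (rewrite e1, e2; reflexivity);
      exfalso; (apply (keyC_inj P Rz a1 a2 b1 b2); auto; try lia; apply (HS (a1,a2) (b1,b2)); auto; intros E; inversion E; congruence). }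
  assert (EA : sumR mA (Fw pp) <= 2 * (8 / pp^3) * (4 * q4 (INR K))).
  { unfold mA. rewrite sumR_app, !sumR_map.
    assert (Hq : forall i, (1 <= i)%nat -> 0 < q4 (INR i)) by (intros; apply Rpower_pos).
    rewrite (sumR_ext (seq 1 K) (fun x => Fw pp (Z.of_nat x)) (fun i => (8/pp^3) * / q4 (INR i) ^ 3)).
    2: { intros i Hi. apply in_seq in Hi. unfold Fw. replace (Z.eqb (Z.of_nat i) 0) with false by (symmetry; apply Z.eqb_neq; lia).
         rewrite Z.abs_eq by lia. rewrite <- INR_IZR_INZ. pose proof (Hq i ltac:(lia)).
         field. repeat split; lra. }
    rewrite (sumR_ext (seq 1 K) (fun x => Fw pp (- Z.of_nat x)) (fun i => (8/pp^3) * / q4 (INR i) ^ 3)).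
    2: { intros i Hi. apply in_seq in Hi. unfold Fw. replace (Z.eqb (- Z.of_nat i) 0) with false by (symmetry; apply Z.eqb_neq; lia).
         rewrite Z.abs_opp, Z.abs_eq by lia. rewrite <- INR_IZR_INZ. pose proof (Hq i ltac:(lia)).
         field. repeat split; lra. }
    rewrite sumR_scal. pose proof (sum_q4 K HK1).
    assert (0 < 8 / pp^3) by (apply Rdiv_lt_0_compat; [lra| apply pow_lt; lra]).
    assert (8 / pp ^ 3 * sumR (seq 1 K) (fun i => / q4 (INR i) ^ 3) <= 8 / pp^3 * (4 * q4 (INR K))) by (apply Rmult_le_compat_l; lra).
    lra. }
  assert (EC : sumR (Zrange K) (fun _ => 8 / IZR P) = (2 * INR K + 1) * (8 / IZR P)).
  { rewrite sumR_const. unfold Zrange. rewrite length_map, length_seq. rewrite plus_INR, mult_INR. simpl. ring. }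
  assert (HPr : IZR P = INR Pn) by (unfold P; rewrite <- INR_IZR_INZ; reflexivity).
  set (u := Rpower (IZR P) (/ INR 3)).
  assert (Hu3 : u ^ 3 = IZR P) by (apply Rpower_root; lra || lia).
  assert (Htarget : Rpower (INR Pn) (- (2/3)) = / u^2).
  { rewrite <- HPr, Rpower_Ropp. unfold u. rewrite Rpower_powfrac by lra. f_equal. f_equal. simpl. field. }
  rewrite Htarget.
  assert (FN := final_num (INR Rn) (IZR P) u pp (q4 (INR K)) (INR K)).
  assert (HKr : INR K <= 16 * INR Rn ^ 2 / IZR P + 1).
  { rewrite INR_IZR_INZ, HKz, plus_IZR.
    pose proof (divb B P HP0). assert (IZR P * IZR (B/P) <= IZR B) by (rewrite <- mult_IZR; apply IZR_le; lia).
    assert (IZR B = 16 * INR Rn ^ 2) by (unfold B, Rz; rewrite !mult_IZR, <- INR_IZR_INZ; simpl; ring).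
    assert (IZR (B/P) <= 16 * INR Rn ^ 2 / IZR P).
    { apply (Rmult_le_reg_l (IZR P)); auto. replace (IZR P * (16 * INR Rn ^ 2 / IZR P)) with (16 * INR Rn ^ 2) by (field; lra). lra. }
    lra. }
  assert (HRr1 : 1 <= INR Rn) by (apply (le_INR 1); lia).
  assert (HPr2 : 2 <= IZR P) by (apply IZR_le; lia).
  assert (HB1' : INR Rn ^ 3 <= 9 * IZR P ^ 2).
  { rewrite HPr. apply le_INR in HB1. rewrite !mult_INR in HB1. assert (E9 : INR 9 = 9) by (simpl; ring). rewrite E9 in HB1.
    replace (INR Rn ^ 3) with (INR Rn * INR Rn * INR Rn) by ring. replace (INR Pn ^ 2) with (INR Pn * INR Pn) by ring. lra. }
  assert (HB2' : IZR P ^ 2 <= 9 * INR Rn ^ 3).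
  { rewrite HPr. apply le_INR in HB2. rewrite !mult_INR in HB2. assert (E9 : INR 9 = 9) by (simpl; ring). rewrite E9 in HB2.
    replace (INR Rn ^ 3) with (INR Rn * INR Rn * INR Rn) by ring. replace (INR Pn ^ 2) with (INR Pn * INR Pn) by ring. lra. }
  specialize (FN HRr1 HPr2 Hu3 (q4_pow _ HIP) (Rpower_pos _ _) Hpp (Rpower_pos _ _)
               (q4_pow _ (lt_0_INR K ltac:(lia))) HKr HB1' HB2').
  lra.
Qed.


Theorem lemma1 :
  exists c : R, 0 < c /\
    forall k : nat, (3 <= k)%nat ->
      QR (fib (ceil_2k3 k)) (fib_lattice k)
        <= c * Rpower (INR (fib k)) (- (2 / 3)).
Proof.
  exists 3000. split; [lra|]. intros k Hk. apply bound_k; auto.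
Qed.
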